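(* Let $A\xrightarrow{\phi}B\to C\to D$ be an exact sequence of finitely generated $\mathbb Z$-modules, and let $Q$ be the cokernel of the map $\phi_{\mathrm{free}}:A_{\mathrm{free}}\to B_{\mathrm{free}}$ induced by $\phi$. Then \[ |C_{\mathrm{tors}}|\le |Q_{\mathrm{tors}}|\cdot|B_{\mathrm{tors}}|\cdot|D_{\mathrm{tors}}|. \]
   Context: For a finitely generated $\mathbb Z$-module $M$, $M_{\mathrm{tors}}$ is its torsion submodule and $M_{\mathrm{free}}=M/M_{\mathrm{tors}}$. *)

(* Defs.v *)
From HB Require Import structures.
From mathcomp Require Export all_boot all_order all_algebra.
From mathcomp Require Export boolp classical_sets cardinality.
From mathcomp Require Import finmap.
Set Implicit Arguments. Unset Strict Implicit. Unset Printing Implicit Defensive.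
Import Order.TTheory GRing.Theory Num.Theory.
Local Open Scope ring_scope.
Local Open Scope classical_set_scope.

Definition fingen (M : zmodType) : Prop :=
  exists s : seq M, forall x : M, exists c : seq int,
    size c = size s /\ x = \sum_(i < size s) s`_i *~ c`_i.

Definition is_torsion (M : zmodType) (x : M) : Prop :=
  exists n : nat, (0 < n)%N /\ x *+ n = 0.

Definition tors (M : zmodType) : set M := fun x : M => is_torsion x.

(* |M_tors| (finite for finitely generated M) *)
Definition ntors (M : zmodType) : nat := (#|` fset_set (@tors M) |)%fset.

(* p : M -> Mf exhibits Mf as M_free = M / M_tors *)
Definition free_quotient (M Mf : zmodType) (p : {additive M -> Mf}) : Prop :=
  (forall y : Mf, exists x : M, p x = y) /\ (forall x : M, p x = 0 <-> is_torsion x).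

Definition exact_at (U V W : zmodType) (f : U -> V) (g : V -> W) : Prop :=
  forall v : V, g v = 0 <-> exists u : U, f u = v.

Definition cokernel_of (X Y Q : zmodType) (h : X -> Y) (q : {additive Y -> Q}) : Prop :=
  (forall z : Q, exists y : Y, q y = z) /\ (forall y : Y, q y = 0 <-> exists x : X, h x = y).

(* Main.v *)
Require Import Defs.
From mathcomp Require Import all_boot all_order all_algebra.
From mathcomp Require Import boolp classical_sets cardinality finmap.
Import GRing.Theory Num.Theory.
Local Open Scope ring_scope.
Local Open Scope classical_set_scope.

Fixpoint spanP {M : zmodType} (s : seq M) (x : M) : Prop :=
  if s is t :: s' then exists k : int, exists y, spanP s' y /\ x = t *~ k + y
  else x = 0.

Section Span.
Variable M : zmodType.
Implicit Types (s : seq M) (x y : M).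

Lemma span0 s : spanP s 0.
Proof. elim: s => [|t s IH] //=; exists 0, 0; by rewrite mulr0z addr0. Qed.

Lemma spanD s x y : spanP s x -> spanP s y -> spanP s (x + y).
Proof.
elim: s x y => [|t s IH] x y /=; first by move=> -> ->; rewrite addr0.
move=> [k [x' [Hx ->]]] [l [y' [Hy ->]]]; exists (k + l), (x' + y'); split.
  exact: IH.
by rewrite mulrzDr; rewrite -!addrA; congr (_ + _); rewrite addrCA.
Qed.

Lemma spanZ s x (z : int) : spanP s x -> spanP s (x *~ z).
Proof.
elim: s x => [|t s IH] x /=; first by move=> ->; rewrite mul0rz.
move=> [k [x' [Hx ->]]]; exists (k * z), (x' *~ z); split; first exact: IH.
by rewrite mulrzDl mulrzA.
Qed.

Lemma spanN s x : spanP s x -> spanP s (- x).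
Proof. by move=> /(@spanZ s x (-1)); rewrite mulrN1z. Qed.

Lemma spanB s x y : spanP s x -> spanP s y -> spanP s (x - y).
Proof. by move=> Hx /spanN; apply: spanD. Qed.

Lemma span_sum s (c : seq int) : size c = size s ->
  spanP s (\sum_(i < size s) s`_i *~ c`_i).
Proof.
elim: s c => [|t s IH] [|c0 c] //=; first by rewrite big_ord0.
move=> [Hc]; rewrite big_ord_recl /=.
by exists c0, (\sum_(i < size s) s`_i *~ c`_i); split; [exact: IH|].
Qed.

Lemma fingen_span : fingen M -> exists s, forall x, spanP s x.
Proof.
move=> [s Hs]; exists s => x; have [c [Hc ->]] := Hs x; exact: span_sum.
Qed.

End Span.

Lemma span_map (M N : zmodType) (F : {additive M -> N}) (s : seq M) x :
  spanP s x -> spanP (map F s) (F x).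
Proof.
elim: s x => [|t s IH] x /=; first by move=> ->; rewrite raddf0.
move=> [k [y [Hy ->]]]; exists k, (F y); split; first exact: IH.
by rewrite raddfD raddfMz.
Qed.

Lemma torsB (M : zmodType) (x y : M) : is_torsion x -> is_torsion y -> is_torsion (x - y).
Proof.
move=> [n [n0 Hn]] [m [m0 Hm]]; exists (n * m)%N; split; first by rewrite muln_gt0 n0.
by rewrite mulrnBl mulrnA Hn mul0rn mulnC mulrnA Hm mul0rn subr0.
Qed.

Lemma torsF (M N : zmodType) (F : {additive M -> N}) x : is_torsion x -> is_torsion (F x).
Proof. by move=> [n [n0 Hn]]; exists n; split=> //; rewrite -raddfMn Hn raddf0. Qed.
Lemma card_fsetM (K K' : choiceType) (A : {fset K}) (E : {fset K'}) :
  (#|` A `*` E| = #|` A| * #|` E|)%fset%N.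
Proof.
rewrite /fsetM.
rewrite (perm_size (enum_imfset2 _ _)).
  rewrite size_allpairs_dep /=.
  by rewrite sumnE big_map big_const_seq count_predT iter_addn_0 mulnC.
by move=> [a b] [c d] _ _ /= [-> ->].
Qed.

Lemma inj_prod (T U V : choiceType) (X : set T) (Y : set U) (Z : set V)
  (f : T -> U) (g : T -> V) :
 finite_set Y -> finite_set Z -> (forall x, X x -> Y (f x)) -> (forall x, X x -> Z (g x)) ->
 (forall x x', X x -> X x' -> f x = f x' -> g x = g x' -> x = x') ->
 finite_set X /\ (#|` fset_set X| <= #|` fset_set Y| * #|` fset_set Z|)%fset%N.
Proof.
move=> fY fZ XY XZ inj.
pose k := fun x => (f x, g x).
have kinj : {in X &, injective k}.
  by move=> x y /set_mem Xx /set_mem Xy [] /inj; apply.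
have sub : k @` X `<=` Y `*` Z by move=> _ [x Xx <-]; split; [apply: XY|apply: XZ].
have fYZ : finite_set (Y `*` Z) by exact: finite_setX.
have fk : finite_set (k @` X) by exact: sub_finite_set sub fYZ.
have fX : finite_set X.
  apply: card_le_finite fk.
  by have := card_esym (inj_card_eq kinj); rewrite card_eq_le => /andP[].
split=> //.
rewrite -card_fsetM -fset_setX //.
have -> : #|` fset_set X| = #|` fset_set (k @` X)|.
  rewrite fset_set_image //; rewrite card_in_imfset //.
  move=> x y; rewrite /= !in_fset_set // => Xx Xy; exact: kinj.
apply: fsubset_leq_card; rewrite -fset_set_sub //.
Qed.

Lemma span_tors_finite (M : zmodType) (s : seq M) :
  finite_set [set x | spanP s x /\ is_torsion x].
Proof.
elim: s => [|t s IH].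
  by apply: (sub_finite_set _ (finite_set1 (0:M))) => x /= [-> _].
set N := [set x | spanP s x /\ is_torsion x] in IH.
set X := [set x | spanP (t :: s) x /\ is_torsion x].
have [[m [m0 Hm]]|noM] := pselect (exists m, (0 < m)%N /\ spanP s (t *+ m)).
- have [kf Hkf] : {kf : M -> int & forall x, X x ->
      exists y, spanP s y /\ x = t *~ kf x + y}.
    apply: (@choice _ _ (fun x k => X x -> exists y, spanP s y /\ x = t *~ k + y)) => x.
    case: (pselect (X x)) => [[[k [y [Hy ->]]] _]|nX]; last by exists 0.
    by exists k => _; exists y.
  pose f x := absz (kf x %% m%:Z)%Z.
  have [rep Hrep] : {rep : nat -> M & forall j, (exists x, X x /\ f x = j) ->
       X (rep j) /\ f (rep j) = j}.
    apply: (@choice _ _ (fun j r => (exists x, X x /\ f x = j) -> X r /\ f r = j)) => j.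
    case: (pselect (exists x, X x /\ f x = j)) => [[x Hx]|nj]; last by exists 0.
    by exists x.
  have m0' : (m%:Z != 0) by rewrite eqz_nat -lt0n.
  have fE x : (f x)%:Z = (kf x %% m%:Z)%Z by rewrite /f gez0_abs // modz_ge0.
  apply: (proj1 (@inj_prod _ _ _ X `I_m N f (fun x => x - rep (f x))
     (finite_II m) IH _ _ _)).
  + move=> x _; rewrite /= -ltz_nat fE; exact: ltz_pmod.
  + move=> x Xx; have [Xr fr] := Hrep (f x) (ex_intro _ x (conj Xx erefl)).
    split; last by apply: torsB; [case: Xx|case: Xr].
    have [y [Hy Ex]] := Hkf x Xx; have [y' [Hy' Er]] := Hkf _ Xr.
    rewrite {1}Ex {1}Er.
    have -> : t *~ kf x + y - (t *~ kf (rep (f x)) + y') =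
              t *~ (kf x - kf (rep (f x))) + (y - y').
      by rewrite mulrzBr opprD !addrA; congr (_ + _); rewrite addrAC.
    apply: spanD; last exact: spanB.
    have emod : (kf x %% m%:Z)%Z = (kf (rep (f x)) %% m%:Z)%Z by rewrite -!fE fr.
    rewrite [kf x](divz_eq _ m%:Z) [kf (rep (f x))](divz_eq _ m%:Z) emod opprD addrACA subrr addr0 -mulrBl mulrC mulrzA.
    exact: spanZ.
  + move=> x x' _ _ -> /addIr //.
- apply: (sub_finite_set _ IH) => x [[k [y [Hy Ex]]] [n [n0 Hn]]].
  have Hk : k = 0.
    apply/eqP; apply/negP => /negP kn0.
    have : spanP s (t *~ (k * n%:Z)).
      have -> : t *~ (k * n%:Z) = - (y *+ n).
        apply/eqP; rewrite -subr_eq0 opprK -Hn Ex mulrnDl mulrzA; apply/eqP.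
        by rewrite -pmulrn.
      by apply: spanN; rewrite pmulrn; apply: spanZ.
    have : k * n%:Z != 0 by rewrite mulf_neq0 // eqz_nat -lt0n.
    case: (k * n%:Z) => [j|j] /=.
      move=> j0 Hj; apply: noM; exists j; split; first by rewrite lt0n.
      exact: Hj.
    move=> _ /spanN; rewrite NegzE mulrNz opprK => Hj; apply: noM; exists j.+1.
    by split.
  split; last by exists n.
  by rewrite Ex Hk mulr0z add0r.
Qed.
Arguments span_tors_finite {M}.

Lemma fingen_tors_finite (M : zmodType) : fingen M -> finite_set (@tors M).
Proof.
move=> /fingen_span [s Hs]; have := span_tors_finite s; apply: sub_finite_set.
by move=> x Tx; split.
Qed.

Arguments fingen_tors_finite {M}.
Arguments fingen_span {M}.

Theorem lemma4p1
  (A B C D : zmodType)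
  (phi : {additive A -> B}) (g : {additive B -> C}) (h : {additive C -> D})
  (fgA : fingen A) (fgB : fingen B) (fgC : fingen C) (fgD : fingen D)
  (exB : exact_at phi g) (exC : exact_at g h)
  (Af Bf : zmodType) (pA : {additive A -> Af}) (pB : {additive B -> Bf})
  (hpA : free_quotient pA) (hpB : free_quotient pB)
  (phif : {additive Af -> Bf}) (hphif : forall a : A, phif (pA a) = pB (phi a))
  (Q : zmodType) (q : {additive Bf -> Q}) (hq : cokernel_of phif q) :
  (ntors C <= ntors Q * ntors B * ntors D)%N.
Proof.
have fTB := fingen_tors_finite fgB.
have fTD := fingen_tors_finite fgD.
have fTQ : finite_set (@tors Q).
  have [sB HsB] := fingen_span fgB.
  apply: (sub_finite_set _ (span_tors_finite (map q (map pB sB)))).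
  move=> z Tz; split=> //.
  have [y <-] := hq.1 z; have [b <-] := hpB.1 y.
  exact/span_map/span_map.
pose I := [set c : C | tors c /\ exists b, g b = c].
have [bof Hbof] : {bof : C -> B & forall c, (exists b, g b = c) -> g (bof c) = c}.
  apply: (@choice _ _ (fun c b => (exists b, g b = c) -> g b = c)) => c.
  case: (pselect (exists b, g b = c)) => [[b Hb]|nb]; last by exists 0.
  by exists b.
pose F c := q (pB (bof c)).
have FT c : I c -> tors (F c).
  move=> [[n [n0 Hn]] Hc]; exists n; split=> //.
  rewrite /F -!raddfMn.
  have : g (bof c *+ n) = 0 by rewrite raddfMn Hbof.
  move=> /exB [a <-]; rewrite -hphif; apply/hq.2; by exists (pA a).
have key c c' : I c -> I c' -> F c = F c' -> exists beta, tors beta /\ g beta = c - c'.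
  move=> [_ Hc] [_ Hc'] EF.
  have : q (pB (bof c - bof c')) = 0 by rewrite !raddfB /= -/(F c) -/(F c') EF subrr.
  move=> /hq.2 [x Ex]; have [a Ea] := hpA.1 x.
  have : pB (bof c - bof c' - phi a) = 0 by rewrite raddfB -Ex -Ea hphif subrr.
  move=> /hpB.2 Tb; exists (bof c - bof c' - phi a); split=> //.
  rewrite !raddfB /= !Hbof //.
  have -> : g (phi a) = 0 by apply/exB; exists a.
  by rewrite subr0.
have [rep2 Hrep2] : {rep2 : Q -> C & forall y, (exists c, I c /\ F c = y) ->
     I (rep2 y) /\ F (rep2 y) = y}.
  apply: (@choice _ _ (fun y r => (exists c, I c /\ F c = y) -> I r /\ F r = y)) => y.
  case: (pselect (exists c, I c /\ F c = y)) => [[c Hc]|nc]; last by exists 0.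
  by exists c.
have [G HG] : {G : C -> B & forall c, I c -> tors (G c) /\ g (G c) = c - rep2 (F c)}.
  apply: (@choice _ _ (fun c b => I c -> tors b /\ g b = c - rep2 (F c))) => c.
  case: (pselect (I c)) => [Ic|nI]; last by exists 0.
  have [Ir Fr] := Hrep2 (F c) (ex_intro _ c (conj Ic erefl)).
  have [beta Hb] := key c (rep2 (F c)) Ic Ir (esym Fr).
  by exists beta.
have injI : forall c c', I c -> I c' -> F c = F c' -> G c = G c' -> c = c'.
  move=> c c' Ic Ic' EF EG.
  have := (HG c Ic).2; rewrite EG (HG c' Ic').2 EF => /addIr //.
have [fI cardI] := @inj_prod _ _ _ I (@tors Q) (@tors B) F G fTQ fTB FT
  (fun c Ic => (HG c Ic).1) injI.
have [rep1 Hrep1] : {rep1 : D -> C & forall d, (exists c, tors c /\ h c = d) ->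
     tors (rep1 d) /\ h (rep1 d) = d}.
  apply: (@choice _ _ (fun d r => (exists c, tors c /\ h c = d) -> tors r /\ h r = d)) => d.
  case: (pselect (exists c, tors c /\ h c = d)) => [[c Hc]|nc]; last by exists 0.
  by exists c.
have s1 : forall c, tors c -> I (c - rep1 (h c)).
  move=> c Tc; have [Tr hr] := Hrep1 (h c) (ex_intro _ c (conj Tc erefl)).
  split; first exact: torsB.
  by apply/exC; rewrite raddfB /= hr subrr.
have s2 : forall c c', tors c -> tors c' -> h c = h c' ->
    c - rep1 (h c) = c' - rep1 (h c') -> c = c'.
  by move=> c c' _ _ <- /addIr.
have [_ cardC] := @inj_prod _ _ _ (@tors C) (@tors D) I h (fun c => c - rep1 (h c))
  fTD fI (fun c Tc => @torsF _ _ h c Tc) s1 s2.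
rewrite /ntors (leq_trans cardC) // mulnC leq_mul2r cardI orbT //.
Qed.
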